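(* Let $\mathcal{A}$ be a finite or countable alphabet, $\mathcal{M}$ a countable set of probability measures on $\mathcal{A}^\infty$, $w:\mathcal{M}\to(0,1]$ a prior with $\sum_\nu w_\nu=1$, $\xi$ the Bayes mixture, $\mu\in\mathcal{M}$, and $\delta\in(0,1]$. Define $\hat d_t$ and $\hat h_t$ (with this $\delta$) as in the context. Then $$\mu(\forall t: d_t\le\hat d_t)\ge 1-\delta\qquad\text{and}\qquad \mu(\forall t: h_t\le\hat h_t)\ge1-\delta.$$
   Context: $\mathcal{A}^\infty$ carries the $\sigma$-algebra generated by cylinders $\Gamma_x=\{x\omega\}$; for a measure $\rho$, $\rho(x):=\rho(\Gamma_x)$, $\rho(y|x):=\rho(xy)/\rho(x)$, and for $\omega\in\mathcal{A}^\infty$, $\rho_{<t}(\omega):=\rho(\omega_{<t})$ with $\omega_{<t}=\omega_1\cdots\omega_{t-1}$. Bayes mixture $\xi(A):=\sum_\nu w_\nu\nu(A)$; posterior $w_\nu(x):=w_\nu\nu(x)/\xi(x)$. Logs natural. For a finite string $x$ and measures $\rho,\xi$: squared Hellinger distance $h_x(\rho,\xi):=\sum_{a\in\mathcal{A}}(\sqrt{\rho(a|x)}-\sqrt{\xi(a|x)})^2$ and KL divergence $d_x(\rho,\xi):=\sum_a\rho(a|x)\ln\frac{\rho(a|x)}{\xi(a|x)}$; random variables $h_t(\rho,\xi)(\omega):=h_{\omega_{<t}}(\rho,\xi)$, $d_t(\rho,\xi)(\omega):=d_{\omega_{<t}}(\rho,\xi)$. Set $d_t:=d_t(\mu,\xi)$,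 $h_t:=h_t(\mu,\xi)$, $c_t(\omega):=\sum_{\nu}w_\nu(\omega_{<t})d_{\omega_{<t}}(\nu,\xi)$. Plausible classes: $\mathcal{M}_t:=\{\nu\in\mathcal{M}:\forall\tau\le t,\ \nu_{<\tau}/\xi_{<\tau}\ge\delta w_\mu/w_\nu\}$ (a random set). Define $\hat d_t:=\frac{c_t}{w_\mu\delta}$ and $\hat h_t:=\sup_{\nu\in\mathcal{M}_t}\left\{\frac{w_\nu}{w_\mu}h_t(\nu,\xi)\right\}$. *)

(* Defs.v *)
From HB Require Import structures.
From mathcomp Require Import all_boot all_order all_algebra.
From mathcomp Require Import all_classical all_reals all_analysis.
Set Implicit Arguments. Unset Strict Implicit. Unset Printing Implicit Defensive.
Import Order.TTheory GRing.Theory Num.Theory.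
Local Open Scope classical_set_scope.
Local Open Scope ring_scope.

Section Defs.
Variables (R : realType) (A : pointedType).

(* omega_{<t} for t = n+1 : the first n letters of omega *)
Definition prefix (om : nat -> A) (n : nat) : seq A := mkseq om n.

Definition cyl (x : seq A) : set (nat -> A) :=
  [set om | prefix om (size x) = x].

Definition cylinders : set (set (nat -> A)) := [set cyl x | x in setT].

Definition seqspace := g_sigma_algebraType cylinders.

Definition cylv (P : set seqspace -> \bar R) (x : seq A) : R := fine (P (cyl x)).

Definition sumE (T : choiceType) (f : T -> \bar R) : \bar R :=
  (esum setT (f^\+) - esum setT (f^\-))%E.

Definition mixture (I : choiceType) (w : I -> R)
  (nu : I -> probability seqspace R) (S : set seqspace) : \bar R :=
  esum setT (fun i => ((w i)%:E * nu i S)%E).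

(* rho(a|x) = rho(xa)/rho(x)  (with the convention r/0 = 0) *)
Definition cond (r : seq A -> R) (x : seq A) (a : A) : R := r (rcons x a) / r x.

Definition hell (r s : seq A -> R) (x : seq A) : \bar R :=
  esum setT (fun a => ((Num.sqrt (cond r x a) - Num.sqrt (cond s x a)) ^+ 2)%:E).

Definition klterm (p q : R) : \bar R :=
  if p == 0 then 0%E else if q == 0 then +oo%E else (p * ln (p / q))%:E.

Definition kl (r s : seq A -> R) (x : seq A) : \bar R :=
  sumE (fun a => klterm (cond r x a) (cond s x a)).

Section Model.
Variables (I : countType) (nu : I -> probability seqspace R) (w : I -> R)
  (m : I) (delta : R).

Definition xi : seq A -> R := cylv (mixture w nu).
Definition nuv (i : I) : seq A -> R := cylv (nu i).

Definition post (i : I) (x : seq A) : R := w i * nuv i x / xi x.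

Definition d_t (om : seqspace) (n : nat) : \bar R := kl (nuv m) xi (prefix om n).
Definition h_t (om : seqspace) (n : nat) : \bar R := hell (nuv m) xi (prefix om n).
Definition c_t (om : seqspace) (n : nat) : \bar R :=
  sumE (fun i => ((post i (prefix om n))%:E * kl (nuv i) xi (prefix om n))%E).

Definition plausible (om : seqspace) (n : nat) (i : I) : Prop :=
  forall k, (k <= n)%N ->
    delta * w m / w i <= nuv i (prefix om k) / xi (prefix om k).

Definition dhat (om : seqspace) (n : nat) : \bar R :=
  (c_t om n * ((w m * delta)^-1)%:E)%E.

Definition hhat (om : seqspace) (n : nat) : \bar R :=
  ereal_sup [set ((w i / w m)%:E * hell (nuv i) xi (prefix om n))%E
            | i in plausible om n].
End Model.
End Defs.

(* Main.v *)
From HB Require Import structures.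
From mathcomp Require Import all_boot all_order all_algebra.
From mathcomp Require Import all_classical all_reals all_analysis.
From mathcomp Require Import lra.
Import Order.TTheory GRing.Theory Num.Theory.
Local Open Scope classical_set_scope.
Local Open Scope ring_scope.
Require Import Defs.
Section S.
Context (R : realType) (A : pointedType).
Local Notation T := (seqspace A).
Lemma size_prefix (om : nat -> A) n : size (prefix om n) = n.
Proof. exact: size_mkseq. Qed.
Lemma prefixS (om : nat -> A) n : prefix om n.+1 = rcons (prefix om n) (om n).
Proof. exact: mkseqS. Qed.
Lemma prefix_take (om : nat -> A) k n : (k <= n)%N -> prefix om k = take k (prefix om n).
Proof. by move=> kn; rewrite /prefix /mkseq -map_take take_iota (minn_idPl kn). Qed.
Lemma cyl_prefix (om : nat -> A) n : cyl (prefix om n) om.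
Proof. by rewrite /cyl /= size_prefix. Qed.
Lemma cyl_eq (x y : seq A) om : size x = size y -> cyl x om -> cyl y om -> x = y.
Proof. by rewrite /cyl/= => sxy hx hy; rewrite -hx -hy sxy. Qed.
Lemma cyl_meas x : measurable (cyl x : set T).
Proof. have : <<s @cylinders A >> (cyl x) by apply: sub_sigma_algebra; exists x. exact. Qed.

Context (hA : countable [set: A]).
Lemma countable_seq : countable [set: seq A].
Proof.
move/countable_injP: hA => [f finj].
have finj' : injective f by move=> a b; apply: finj; rewrite in_setT.
apply/countable_injP; exists (fun s => pickle (map f s)) => s1 s2 _ _ H.
apply: (inj_map finj'); exact: (pcan_inj pickleK H).
Qed.
Lemma enc_ex : exists enc : seq A -> nat, injective enc.
Proof.
move/countable_injP: countable_seq => [f finj].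
by exists f => a b; apply: finj; rewrite in_setT.
Qed.
Lemma meas_cyls (E : set (seq A)) : measurable (\bigcup_(x in E) (cyl x : set T)).
Proof.
rewrite bigcup_mkcond; apply: countable_bigcupT_measurable => [|x].
  exact: countable_seq.
by case: ifP => // _; exact: cyl_meas.
Qed.
Lemma meas_prefix (P : nat -> T -> Prop) :
  (forall n (om om' : T), prefix om n = prefix om' n -> P n om -> P n om') ->
  measurable [set om : T | forall n, P n om].
Proof.
move=> HP.
have -> : [set om : T | forall n, P n om] = \bigcap_n [set om | P n om].
  by apply/seteqP; split => om /= H n => [_|]; [exact: H|exact: H n I].
apply: bigcapT_measurable => n.
have -> : [set om : T | P n om] = \bigcup_(x in [set x | exists om : T, prefix om n = x /\ P n om]) (cyl x : set T).
  apply/seteqP; split => om.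
  - by move=> Pom; exists (prefix om n); [exists om|exact: cyl_prefix].
  - move=> [x [om' [<- Pom']]]; rewrite /cyl/= size_prefix => c.
    by apply: (HP n om') Pom'; rewrite c.
exact: meas_cyls.
Qed.
Lemma L_cyl (mu : {measure set T -> \bar R}) (k : nat) (E : set (seq A)) :
  (forall x, E x -> size x = k) ->
  mu (\bigcup_(x in E) (cyl x : set T)) = \esum_(x in E) mu (cyl x).
Proof.
move=> Ek; have [enc encinj] := enc_ex.
pose G n : set T := \bigcup_(x in E `&` [set x | enc x = n]) (cyl x : set T).
have GE x : E x -> G (enc x) = cyl x.
  move=> Ex; apply/seteqP; split => om.
  - by move=> [y [Ey /encinj ->]].
  - by move=> c; exists x.
have G0 n : ~ (enc @` E) n -> G n = set0.
  move=> nE; apply/seteqP; split => om // [y [Ey eyn]] _; apply: nE; by exists y.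
have -> : \bigcup_(x in E) (cyl x : set T) = \bigcup_n G n.
  apply/seteqP; split => om.
  - move=> [x Ex c]; exists (enc x) => //; by rewrite GE.
  - by move=> [n _ [x [Ex _] c]]; exists x.
have mG n : measurable (G n) by exact: meas_cyls.
have tG : trivIset setT G.
  move=> i j _ _ [om [[x [Ex <-] cx] [y [Ey <-] cy]]]; congr enc.
  by apply: (@cyl_eq x y om) => //; rewrite !Ek.
rewrite (measure_bigcup mu setT G (fun n _ => mG n) tG).
rewrite nneseries_esum //.
have -> : [set x | x \in [set: nat]] = setT.
  by apply/seteqP; split => x //= _; rewrite in_setT.
rewrite (eq_esum (b := fun x => mu (G (enc x)))); last by move=> x Ex; rewrite GE.
rewrite -(esum_image E enc (fun n => mu (G n))); last by move=> ? ? _ _; exact: encinj.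
rewrite esum_mkcond [RHS]esum_mkcond; apply: eq_esum => n _.
rewrite in_setT; case: (boolP (n \in enc @` E)) => // /negP; rewrite in_setE => nE.
by rewrite G0 // measure0.
Qed.
Lemma sum_letters (mu : {measure set T -> \bar R}) (x : seq A) :
  \esum_(a in [set: A]) mu (cyl (rcons x a)) = mu (cyl x).
Proof.
have -> : (cyl x : set T) = \bigcup_(y in range (rcons x)) (cyl y : set T).
  apply/seteqP; split => om.
  - move=> c; exists (rcons x (om (size x))); first by exists (om (size x)).
    by move: c; rewrite /cyl/= size_rcons prefixS => ->.
  - by move=> [_ [a _ <-]]; rewrite /cyl/= size_rcons prefixS => /rcons_inj [h _].
rewrite (@L_cyl mu (size x).+1); last by move=> _ [a _ <-]; rewrite size_rcons.
by rewrite esum_image //; move=> a b _ _; exact: rcons_injr.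
Qed.
End S.
Section Model.
Context (R : realType) (A : pointedType).
Local Notation T := (seqspace A).
Context (I : countType) (nu : I -> probability T R) (w : I -> R)
  (w_pos : forall i, 0 < w i) (w_sum : esum [set: I] (fun i => (w i)%:E) = 1%E).
Definition wn (i : I) : {nonneg R} := NngNum (ltW (w_pos i)).
Definition mk (n : nat) : {measure set T -> \bar R} :=
  match pickle_inv n with Some i => mscale (wn i) (nu i) | None => mzero end.
Definition Xi : {measure set T -> \bar R} := mseries mk 0.
Lemma XiE S : mixture w nu S = Xi S.
Proof.
rewrite /mixture /Xi; transitivity (\sum_(0 <= k <oo) mk k S)%E; last by []. 
rewrite nneseries_esumT //.
have -> : \esum_(n in [set: nat]) mk n S = \esum_(n in pickle @` [set: I]) mk n S.
  rewrite [RHS]esum_mkcond; apply: eq_esum => n _.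
  case: ifPn => // /negP; rewrite in_setE => nP.
  rewrite /mk; case E : (pickle_inv n) => [i|] //.
  exfalso; apply: nP; exists i => //.
  by have := @pickle_invK I n; rewrite E.
rewrite esum_image; last by move=> ? ? _ _; exact: (pcan_inj pickleK).
by apply: eq_esum => i _; rewrite /mk pickleK_inv.
Qed.

Lemma Xi_setT : Xi setT = 1%E.
Proof.
rewrite -XiE /mixture -w_sum; apply: eq_esum => i _.
by rewrite probability_setT mule1.
Qed.
Lemma Xi_le1 S : measurable S -> (Xi S <= 1)%E.
Proof. by move=> mS; rewrite -Xi_setT; apply: le_measure; rewrite ?inE. Qed.
Lemma Xi_ge i S : ((w i)%:E * nu i S <= Xi S)%E.
Proof.
rewrite -XiE; apply: esum_ge; exists [set i]; last by rewrite fsbig_set1.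
by split; [exact: finite_set1|move=> ?].
Qed.
Lemma nuvE i x : (nuv nu i x)%:E = nu i (cyl x).
Proof.
rewrite /nuv /cylv fineK // ge0_fin_numE //.
by rewrite (le_lt_trans (probability_le1 (nu i) (@cyl_meas A x))) // ltry.
Qed.
Lemma xiE x : (xi nu w x)%:E = Xi (cyl x).
Proof.
rewrite /xi /cylv XiE fineK // ge0_fin_numE //.
by rewrite (le_lt_trans (Xi_le1 _ (@cyl_meas A x))) // ltry.
Qed.
Lemma nuv_ge0 i x : 0 <= nuv nu i x.
Proof. by rewrite -lee_fin nuvE. Qed.
Lemma nuv_le1 i x : nuv nu i x <= 1.
Proof. by rewrite -lee_fin nuvE probability_le1 //; exact: cyl_meas. Qed.
Lemma xi_ge0 x : 0 <= xi nu w x.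
Proof. by rewrite -lee_fin xiE. Qed.
Lemma xi_le1 x : xi nu w x <= 1.
Proof. by rewrite -lee_fin xiE; apply: Xi_le1; exact: cyl_meas. Qed.
Lemma w_nuv_le_xi i x : w i * nuv nu i x <= xi nu w x.
Proof. by rewrite -lee_fin EFinM nuvE xiE; exact: Xi_ge. Qed.

Context (hA : countable [set: A]).
Lemma kl_ge0 i x : (0 <= kl (nuv nu i) (xi nu w) x)%E.
Proof.
rewrite /kl /sumE.
set p := cond (nuv nu i) x; set q := cond (xi nu w) x.
have [nx0|nx0] := eqVneq (nuv nu i x) 0.
  have p0 a : p a = 0 by rewrite /p /cond nx0 invr0 mulr0.
  rewrite !esum1 ?subee //.
    by move=> a _; rewrite funenegE /klterm p0 eqxx oppe0 maxxx.
  by move=> a _; rewrite funeposE /klterm p0 eqxx maxxx.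
have npos : 0 < nuv nu i x by rewrite lt_neqAle eq_sym nx0 nuv_ge0.
have xpos : 0 < xi nu w x.
  exact: lt_le_trans (mulr_gt0 (w_pos i) npos) (w_nuv_le_xi i x).
have sum_p : \esum_(a in [set: A]) (p a)%:E = 1%E.
  have ci : 0 <= (nuv nu i x)^-1 by rewrite invr_ge0 ltW.
  pose cn : {nonneg R} := NngNum ci.
  have H := @sum_letters R A hA (mscale cn (nu i)) x.
  have mE (S : set T) : (mscale cn (nu i) : {measure set T -> \bar R}) S = ((cn%:num)%:E * nu i S)%E by [].
  have -> : 1%E = mscale cn (nu i) (cyl x) by rewrite mE -nuvE -EFinM mulVf.
  rewrite -H; apply: eq_esum => a _.
  by rewrite mE -nuvE -EFinM /p /cond mulrC.
have sum_q : \esum_(a in [set: A]) (q a)%:E = 1%E.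
  have ci : 0 <= (xi nu w x)^-1 by rewrite invr_ge0 ltW.
  pose cn : {nonneg R} := NngNum ci.
  have H := @sum_letters R A hA (mscale cn Xi) x.
  have mE (S : set T) : (mscale cn Xi : {measure set T -> \bar R}) S = ((cn%:num)%:E * Xi S)%E by [].
  have -> : 1%E = mscale cn Xi (cyl x) by rewrite mE -xiE -EFinM mulVf ?lt0r_neq0.
  rewrite -H; apply: eq_esum => a _.
  by rewrite mE -xiE -EFinM /q /cond mulrC.
have p_ge0 a : 0 <= p a by rewrite /p /cond divr_ge0 // nuv_ge0.
have q_ge0 a : 0 <= q a by rewrite /q /cond divr_ge0 // xi_ge0.
have pq a : 0 < p a -> 0 < q a.
  move=> pa; rewrite /q /cond divr_gt0 //.
  have : 0 < nuv nu i (rcons x a).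
    by move: pa; rewrite /p /cond pmulr_lgt0 // invr_gt0.
  move=> na; exact: lt_le_trans (mulr_gt0 (w_pos i) na) (w_nuv_le_xi i _).
pose g a : R := if p a == 0 then 0 else p a * ln (p a / q a).
have fg : (fun a => klterm (p a) (q a)) = (fun a => (g a)%:E).
  apply: funext => a; rewrite /klterm /g; case: eqP => // pa0.
  have pa : 0 < p a by rewrite lt_neqAle eq_sym p_ge0 andbT; apply/eqP.
  by rewrite (negbTE (lt0r_neq0 (pq a pa))).
have gpq a : p a - q a <= g a.
  rewrite /g; case: eqP => [->|pa0]; first by rewrite sub0r oppr_le0.
  have pa : 0 < p a by rewrite lt_neqAle eq_sym p_ge0 andbT; apply/eqP.
  have qa := pq a pa.
  have qp : 0 < q a / p a by rewrite divr_gt0.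
  have h1 : ln (q a / p a) <= q a / p a - 1.
    have := @le_ln1Dx R (q a / p a - 1).
    rewrite [1 + _]addrC subrK; apply; lra.
  have e1 : p a * (q a / p a) = q a by rewrite mulrCA divff ?mulr1 // lt0r_neq0.
  have e2 : ln (p a / q a) = - ln (q a / p a).
    by rewrite -invf_div lnV // posrE.
  rewrite e2; nra.
rewrite fg.
have claim1 a : ((fun a => (g a)%:E)^\- a <= (q a)%:E)%E.
  rewrite funenegE ge_max; apply/andP; split; last exact: (q_ge0 a).
  rewrite -EFinN lee_fin.
  have := gpq a; have := p_ge0 a; lra.
have claim2 a : ((fun a => (g a)%:E)^\- a + (p a)%:E <=
                 (fun a => (g a)%:E)^\+ a + (q a)%:E)%E.
  rewrite funenegE funeposE -EFinN.
  have := gpq a.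
  case: (lerP 0 (g a)) => g0 h.
    rewrite (max_r (x := (- g a)%:E)); last by rewrite lee_fin; lra.
    rewrite max_l ?lee_fin //; lra.
  rewrite (max_l (x := (- g a)%:E)); last by rewrite lee_fin; lra.
  rewrite (max_r (x := (g a)%:E)); last by rewrite lee_fin ltW.
  rewrite ?lee_fin; lra.
have hle := le_esum (I := [set: A]) (fun a _ => claim2 a).
rewrite !esumD // in hle; try by move=> a _; rewrite lee_fin.
rewrite sum_p sum_q in hle.
have Gle : (\esum_(a in [set: A]) (fun a => (g a)%:E)^\- a <= 1)%E.
  by rewrite -sum_q; apply: le_esum => a _; exact: claim1.
have Gfin : (\esum_(a in [set: A]) (fun a => (g a)%:E)^\- a)%E \is a fin_num.
  rewrite ge0_fin_numE ?(le_lt_trans Gle) ?ltry //.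
  by apply: esum_ge0 => a _; exact: funeneg_ge0.
by rewrite sube_ge0 ?Gfin // -(leeD2rE _ _ (fin_numE 1%E)) .
Qed.

Lemma post_ge0 j x : 0 <= post nu w j x.
Proof. by rewrite /post divr_ge0 ?mulr_ge0 ?xi_ge0 ?nuv_ge0 // ltW. Qed.

Lemma ct_ge om n j : ((post nu w j (prefix om n))%:E *
   kl (nuv nu j) (xi nu w) (prefix om n) <= c_t nu w om n)%E.
Proof.
rewrite /c_t /sumE.
set f := fun i => _.
have f0 i : (0 <= f i)%E by rewrite /f mule_ge0 ?lee_fin ?post_ge0 ?kl_ge0.
rewrite (esum1 (a := (f^\-)%E)); last first.
  by move=> i _; rewrite funenegE; apply/max_r; rewrite leeNl oppe0.
rewrite sube0 (eq_esum (b := f)); last by move=> i _; rewrite funeposE; apply/max_l.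
apply: esum_ge; exists [set j]; last by rewrite fsbig_set1.
by split; [exact: finite_set1|move=> ?].
Qed.

Context (m : I) (delta : R) (delta_pos : 0 < delta).
Definition good (om : T) := forall k,
  delta <= nuv nu m (prefix om k) / xi nu w (prefix om k).

Lemma good_d om : good om -> forall n, (d_t nu w m om n <= dhat nu w m delta om n)%E.
Proof.
move=> G n; rewrite /d_t /dhat.
set x := prefix om n.
have kl0 := kl_ge0 m x.
have hp : w m * delta <= post nu w m x.
  by rewrite /post -mulrA ler_wpM2l ?(ltW (w_pos m)) // G.
have c0 : 0 < w m * delta by rewrite mulr_gt0.
have h1 : ((w m * delta)%:E * kl (nuv nu m) (xi nu w) x <= c_t nu w om n)%E.
  apply: le_trans (ct_ge om n m); apply: lee_wpmul2r => //; by rewrite lee_fin.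
apply: le_trans (lee_wpmul2r _ h1); last by rewrite lee_fin invr_ge0 ltW.
by rewrite muleC muleA -EFinM mulVf ?lt0r_neq0 // mul1e.
Qed.

Lemma good_h om : good om -> forall n, (h_t nu w m om n <= hhat nu w m delta om n)%E.
Proof.
move=> G n; rewrite /h_t /hhat; apply: ereal_sup_ubound; exists m.
  by move=> k _; rewrite mulfK ?lt0r_neq0.
by rewrite divff ?lt0r_neq0 // mul1e.
Qed.

Definition ratio x := nuv nu m x / xi nu w x.
Definition Bad k : set T := [set om | ratio (prefix om k) < delta /\
   forall j, (j < k)%N -> delta <= ratio (prefix om j)].
Definition Ek k : set (seq A) := [set x | size x = k /\ ratio x < delta /\
   forall j, (j < k)%N -> delta <= ratio (take j x)].

Lemma BadE k : Bad k = \bigcup_(x in Ek k) (cyl x : set T).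
Proof.
apply/seteqP; split => om.
- move=> [h1 h2]; exists (prefix om k); last exact: cyl_prefix.
  split; first exact: size_prefix.
  split => // j jk; rewrite -(@prefix_take A om j k (ltnW jk)); exact: h2.
- move=> [x [sx [h1 h2]] c].
  have px : prefix om k = x by move: c; rewrite /cyl/= sx.
  split; first by rewrite px.
  move=> j jk; rewrite (@prefix_take A om j k (ltnW jk)) px; exact: h2.
Qed.

Lemma Bad_meas k : measurable (Bad k).
Proof. by rewrite BadE; apply: meas_cyls. Qed.

Lemma notgoodE : ~` [set om | good om] = \bigcup_k Bad k.
Proof.
apply/seteqP; split => om /=.
- move=> /existsNP [k hk].
  have ex : exists k, ratio (prefix om k) < delta.
    by exists k; rewrite ltNge; apply/negP.
  case: (ex_minnP ex) => k0 h0 hmin; exists k0 => //; split => // j jk.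
  rewrite leNgt; apply/negP => hj.
  by move: (hmin j hj); rewrite leqNgt jk.
- move=> [k _ [h1 _]] G; have := G k.
  by rewrite leNgt; move: h1; rewrite /ratio => ->.
Qed.

Lemma Bad_triv : trivIset setT Bad.
Proof.
move=> i j _ _ [om [[hi1 hi2] [hj1 hj2]]].
case: (ltngtP i j) => // ij.
- by have := hj2 i ij; rewrite leNgt hi1.
- by have := hi2 j ij; rewrite leNgt hj1.
Qed.

Definition cd : {nonneg R} := NngNum (ltW delta_pos).
Lemma dXiE S : (mscale cd Xi : {measure set T -> \bar R}) S = (delta%:E * Xi S)%E.
Proof. by []. Qed.

Lemma Bad_le k : (nu m (Bad k) <= (mscale cd Xi : {measure set T -> \bar R}) (Bad k))%E.
Proof.
have Es : forall x, Ek k x -> size x = k by move=> x [].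
rewrite BadE (@L_cyl R A hA (nu m) k _ Es) (@L_cyl R A hA _ k _ Es).
apply: le_esum => x [sx [hr _]].
rewrite dXiE; apply: (@le_trans _ _ (nuv nu m x)%:E); first by rewrite nuvE.
rewrite -xiE -EFinM lee_fin.
have [x0|x0] := eqVneq (xi nu w x) 0.
  have := w_nuv_le_xi m x; rewrite x0 mulr0 => h.
  have := nuv_ge0 m x; have := w_pos m; nra.
have xpos : 0 < xi nu w x by rewrite lt_neqAle eq_sym x0 xi_ge0.
by move: hr; rewrite /ratio ltr_pdivrMr // mulrC => /ltW.
Qed.

Lemma good_meas : measurable [set om : T | good om].
Proof.
by apply: (@meas_prefix A hA (fun k om => delta <= ratio (prefix om k))) => n om om' ->.
Qed.

Lemma ville : ((1 - delta)%:E <= nu m [set om | good om])%E.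
Proof.
have mG := good_meas.
have hC : (nu m (~` [set om | good om]) <= delta%:E)%E.
  rewrite notgoodE (measure_bigcup (nu m) setT Bad (fun k _ => Bad_meas k) Bad_triv).
  apply: (@le_trans _ _ (\sum_(0 <= k <oo | k \in setT)
      (mscale cd Xi : {measure set T -> \bar R}) (Bad k))%E).
    by apply: lee_nneseries => // k _; exact: Bad_le.
  rewrite -(measure_bigcup _ setT Bad (fun k _ => Bad_meas k) Bad_triv).
  rewrite -notgoodE dXiE -[leRHS]mule1; apply: lee_wpmul2l; first by rewrite lee_fin ltW.
  by apply: Xi_le1; exact: measurableC.
move: hC; rewrite probability_setC //.
have pfin : nu m [set om | good om] = (fine (nu m [set om | good om]))%:E.
  rewrite fineK // ge0_fin_numE //.
  by rewrite (le_lt_trans (probability_le1 (nu m) mG)) // ltry.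
by rewrite pfin -EFinB !lee_fin; lra.
Qed.
End Model.

Lemma prefix_eq_le (A : pointedType) (om om' : nat -> A) n k :
  prefix om n = prefix om' n -> (k <= n)%N -> prefix om k = prefix om' k.
Proof. by move=> e kn; rewrite (@prefix_take A om k n kn) (@prefix_take A om' k n kn) e. Qed.


Theorem theorem6 (R : realType) (A : pointedType) (hA : countable [set: A])
  (I : countType) (nu : I -> probability (seqspace A) R)
  (nu_inj : injective nu)
  (w : I -> R) (w_pos : forall i, 0 < w i) (w_le1 : forall i, w i <= 1)
  (w_sum : esum [set: I] (fun i => (w i)%:E) = 1%E)
  (m : I) (delta : R) (delta_pos : 0 < delta) (delta_le1 : delta <= 1) :
  ((1 - delta)%:E <=
     nu m [set om | forall n, (d_t nu w m om n <= dhat nu w m delta om n)%E])%E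
  /\
  ((1 - delta)%:E <=
     nu m [set om | forall n, (h_t nu w m om n <= hhat nu w m delta om n)%E])%E.
Proof.
have V := @ville R A I nu w w_pos w_sum hA m delta delta_pos.
have mG : measurable [set om : seqspace A | good R A I nu w m delta om] by apply: good_meas.
split; apply: le_trans V _; apply: le_measure; rewrite ?inE //.
- apply: (@meas_prefix A hA
    (fun n om => (d_t nu w m om n <= dhat nu w m delta om n)%E)).
  by move=> n om om' e; rewrite /d_t /dhat /c_t e.
- by move=> om /= G; exact: good_d.
- apply: (@meas_prefix A hA
    (fun n om => (h_t nu w m om n <= hhat nu w m delta om n)%E)).
  move=> n om om' e; rewrite /h_t /hhat.
  have -> : plausible nu w m delta om n = plausible nu w m delta om' n.
    apply/funext => i; apply/propext; split => H k kn.
      by rewrite -(@prefix_eq_le _ _ _ _ _ e kn); exact: H.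
    by rewrite (@prefix_eq_le _ _ _ _ _ e kn); exact: H.
  by rewrite e.
- by move=> om /= G; exact: good_h.
Qed.
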